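(* A category $\mathbf{C}$ is a Kleene-Kozen category if and only if (a) $\mathbf{C}$ is enriched over bounded join-semilattices and strict join-preserving maps, and (b) there is an operator $(\cdot)^\ast:\mathbf{C}(X,X)\to\mathbf{C}(X,X)$ for every object $X$ such that for all objects $X,Y$ and morphisms $f:X\to X$, $g:Y\to Y$, $h:X\to X$, $k:Y\to X$: 1. $f^\ast=\mathrm{id}\lor f^\ast\circ f$; 2. $\mathrm{id}^\ast=\mathrm{id}$; 3. $f^\ast=(f\lor\mathrm{id})^\ast$; 4. if $h\circ k=k\circ g$ then $h^\ast\circ k=k\circ g^\ast$.
   Context: A category $\mathbf{C}$ is enriched over bounded join-semilattices and strict join-preserving maps if each hom-set $\mathbf{C}(X,Y)$ is a join-semilattice $(\lor)$ with a least element $\bot$, and composition preserves binary joins and $\bot$ in each argument; the order is $f\le g\iff f\lor g=g$. A Kleene-Kozen category is such an enriched category together with an operator $(\cdot)^\ast:\mathbf{C}(X,X)\to\mathbf{C}(X,X)$ for every object $X$, such that for all $f:Y\to Y$, $g:Y\to Z$, $h:X\to Y$: $g\circ f^\ast$ is the least prefixpoint of $x\mapsto g\lor x\circ f$ on $\mathbf{C}(Y,Z)$, and $f^\ast\circ h$ is the least prefixpoint of $x\mapsto h\lor f\circ x$ on $\mathbf{C}(X,Y)$. *)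

(* Defs.v *)
Set Implicit Arguments.
Unset Strict Implicit.

(* A category enriched over bounded join-semilattices and strict
   join-preserving maps. Composition [comp g f] is g ∘ f (first f, then g). *)
Record JSLCategory := {
  Obj :> Type;
  Hom : Obj -> Obj -> Type;
  idm : forall X, Hom X X;
  comp : forall X Y Z, Hom Y Z -> Hom X Y -> Hom X Z;
  comp_assoc : forall X Y Z W (h : Hom Z W) (g : Hom Y Z) (f : Hom X Y),
      comp h (comp g f) = comp (comp h g) f;
  comp_id_l : forall X Y (f : Hom X Y), comp (idm Y) f = f;
  comp_id_r : forall X Y (f : Hom X Y), comp f (idm X) = f;
  join : forall X Y, Hom X Y -> Hom X Y -> Hom X Y;
  bot : forall X Y, Hom X Y;
  join_assoc : forall X Y (f g h : Hom X Y), join f (join g h) = join (join f g) h;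
  join_comm : forall X Y (f g : Hom X Y), join f g = join g f;
  join_idem : forall X Y (f : Hom X Y), join f f = f;
  join_bot : forall X Y (f : Hom X Y), join f (bot X Y) = f;
  comp_join_l : forall X Y Z (g1 g2 : Hom Y Z) (f : Hom X Y),
      comp (join g1 g2) f = join (comp g1 f) (comp g2 f);
  comp_join_r : forall X Y Z (g : Hom Y Z) (f1 f2 : Hom X Y),
      comp g (join f1 f2) = join (comp g f1) (comp g f2);
  comp_bot_l : forall X Y Z (f : Hom X Y), comp (bot Y Z) f = bot X Z;
  comp_bot_r : forall X Y Z (g : Hom Y Z), comp g (bot X Y) = bot X Z
}.

Arguments Hom : clear implicits.
Arguments idm {_} X.
Arguments comp {_ X Y Z} _ _.
Arguments join {_ X Y} _ _.
Arguments bot {_} X Y.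

Definition hle (C : JSLCategory) (X Y : C) (f g : Hom C X Y) : Prop :=
  join f g = g.

Definition least_prefixpoint (C : JSLCategory) (X Y : C)
    (F : Hom C X Y -> Hom C X Y) (x : Hom C X Y) : Prop :=
  hle (F x) x /\ (forall y, hle (F y) y -> hle x y).

Definition KK_star (C : JSLCategory) (star : forall X : C, Hom C X X -> Hom C X X)
  : Prop :=
  (forall (Y Z : C) (f : Hom C Y Y) (g : Hom C Y Z),
      least_prefixpoint (fun x => join g (comp x f)) (comp g (star Y f))) /\
  (forall (X Y : C) (f : Hom C Y Y) (h : Hom C X Y),
      least_prefixpoint (fun x => join h (comp f x)) (comp (star Y f) h)).

Definition is_KleeneKozen (C : JSLCategory) : Prop :=
  exists star : forall X : C, Hom C X X -> Hom C X X, KK_star star.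

Definition star_axioms (C : JSLCategory) (star : forall X : C, Hom C X X -> Hom C X X)
  : Prop :=
  forall (X Y : C) (f : Hom C X X) (g : Hom C Y Y) (h : Hom C X X) (k : Hom C Y X),
    star X f = join (idm X) (comp (star X f) f) /\
    star X (idm X) = idm X /\
    star X f = star X (join f (idm X)) /\
    (comp h k = comp k g -> comp (star X h) k = comp k (star Y g)).

(* Main.v *)
Require Import Defs.
From Stdlib Require Import Setoid.

Lemma le_refl (C : JSLCategory) (X Y : C) (a : Hom C X Y) : hle a a.
Proof. unfold hle; apply join_idem. Qed.

Lemma le_trans (C : JSLCategory) (X Y : C) (a b c : Hom C X Y) :
  hle a b -> hle b c -> hle a c.
Proof. unfold hle; intros H1 H2. rewrite <- H2, join_assoc, H1. reflexivity. Qed.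

Lemma le_antisym (C : JSLCategory) (X Y : C) (a b : Hom C X Y) :
  hle a b -> hle b a -> a = b.
Proof. unfold hle; intros H1 H2. rewrite join_comm in H2. congruence. Qed.

Lemma le_joinl (C : JSLCategory) (X Y : C) (a b : Hom C X Y) : hle a (join a b).
Proof. unfold hle. rewrite join_assoc, join_idem. reflexivity. Qed.

Lemma le_joinr (C : JSLCategory) (X Y : C) (a b : Hom C X Y) : hle b (join a b).
Proof. rewrite join_comm. apply le_joinl. Qed.

Lemma join_le (C : JSLCategory) (X Y : C) (a b c : Hom C X Y) :
  hle a c -> hle b c -> hle (join a b) c.
Proof. unfold hle; intros H1 H2. rewrite <- join_assoc, H2, H1. reflexivity. Qed.

Lemma join_mono (C : JSLCategory) (X Y : C) (a b a' b' : Hom C X Y) :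
  hle a a' -> hle b b' -> hle (join a b) (join a' b').
Proof.
  intros H1 H2. apply join_le.
  - eapply le_trans; [exact H1| apply le_joinl].
  - eapply le_trans; [exact H2| apply le_joinr].
Qed.

Lemma comp_mono_l (C : JSLCategory) (X Y Z : C) (g1 g2 : Hom C Y Z) (f : Hom C X Y) :
  hle g1 g2 -> hle (comp g1 f) (comp g2 f).
Proof. unfold hle; intros H. rewrite <- comp_join_l, H. reflexivity. Qed.

Lemma comp_mono_r (C : JSLCategory) (X Y Z : C) (g : Hom C Y Z) (f1 f2 : Hom C X Y) :
  hle f1 f2 -> hle (comp g f1) (comp g f2).
Proof. unfold hle; intros H. rewrite <- comp_join_r, H. reflexivity. Qed.

Lemma eq_le (C : JSLCategory) (X Y : C) (a b : Hom C X Y) : a = b -> hle a b.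
Proof. intros ->; apply le_refl. Qed.

Lemma lpp_fix (C : JSLCategory) (X Y : C) (F : Hom C X Y -> Hom C X Y) x :
  (forall a b, hle a b -> hle (F a) (F b)) -> least_prefixpoint F x -> F x = x.
Proof.
  intros M [P L]. apply le_antisym; auto.
Qed.

Theorem proposition2 (C : JSLCategory) :
  is_KleeneKozen C <->
  exists star : forall X : C, Hom C X X -> Hom C X X, star_axioms star.
Proof.
  split.
  - intros [star [HL HR]]. exists star.
    assert (UL : forall X (f : Hom C X X), star X f = join (idm X) (comp (star X f) f)).
    { intros X f. pose proof (HL X X f (idm X)) as H. rewrite comp_id_l in H.
      symmetry. refine (@lpp_fix _ _ _ _ _ _ H); intros a b Hab.
      apply join_mono; [apply le_refl| apply comp_mono_l; exact Hab]. }
    assert (UR : forall X (f : Hom C X X), star X f = join (idm X) (comp f (star X f))).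
    { intros X f. pose proof (HR X X f (idm X)) as H. rewrite comp_id_r in H.
      symmetry. refine (@lpp_fix _ _ _ _ _ _ H); intros a b Hab.
      apply join_mono; [apply le_refl| apply comp_mono_r; exact Hab]. }
    intros X Y f g h k. split; [apply UL|]. split; [|split].
    + destruct (HL X X (idm X) (idm X)) as [P L]. rewrite comp_id_l in P, L.
      rewrite comp_id_r in P.
      apply le_antisym.
      * apply L. rewrite comp_id_r. apply eq_le, join_idem.
      * eapply le_trans; [apply le_joinl| exact P].
    + set (e := join f (idm X)).
      destruct (HL X X e (idm X)) as [Pe Le]. destruct (HL X X f (idm X)) as [Pf Lf].
      rewrite comp_id_l in Pe, Le, Pf, Lf.
      apply le_antisym.
      * apply Lf. eapply le_trans; [| apply eq_le; symmetry; apply UL].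
        apply join_mono; [apply le_refl| apply comp_mono_r; apply le_joinl].
      * apply Le. apply eq_le. unfold e.
        rewrite comp_join_r, comp_id_r, join_assoc, <- UL. apply join_idem.
    + intros Hhk.
      destruct (HR Y X h k) as [P1 L1]. destruct (HL Y X g k) as [P2 L2].
      apply le_antisym.
      * apply L1. apply eq_le.
        rewrite comp_assoc, Hhk, <- comp_assoc.
        rewrite (UR Y g) at 2. rewrite comp_join_r, comp_id_r. reflexivity.
      * apply L2. apply eq_le.
        rewrite <- comp_assoc, <- Hhk, comp_assoc.
        rewrite (UL X h) at 2. rewrite comp_join_l, comp_id_l. reflexivity.
  - intros [star A]. exists star.
    assert (A1 : forall X (f : Hom C X X), star X f = join (idm X) (comp (star X f) f))
      by (intros X f; apply (A X X f f f (idm X))).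
    assert (A2 : forall X : C, star X (idm X) = idm X)
      by (intros X; apply (A X X (idm X) (idm X) (idm X) (idm X))).
    assert (A3 : forall X (f : Hom C X X), star X f = star X (join f (idm X)))
      by (intros X f; apply (A X X f f f (idm X))).
    assert (A4 : forall X Y (g : Hom C Y Y) (h : Hom C X X) (k : Hom C Y X),
               comp h k = comp k g -> comp (star X h) k = comp k (star Y g))
      by (intros X Y g h k; apply (A X Y h g h k)).
    assert (UR : forall X (f : Hom C X X), star X f = join (idm X) (comp f (star X f))).
    { intros X f. rewrite <- (A4 X X f f f eq_refl). apply A1. }
    assert (IL : forall Y Z (f : Hom C Y Y) (y : Hom C Y Z),
               hle (comp y f) y -> comp y (star Y f) = y).
    { intros Y Z f y H. pose proof (A4 Z Y (join f (idm Y)) (idm Z) y) as E.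
      rewrite A2, comp_id_l, <- A3 in E. symmetry; apply E.
      rewrite comp_join_r, comp_id_r. symmetry; exact H. }
    assert (IR : forall X Y (f : Hom C Y Y) (y : Hom C X Y),
               hle (comp f y) y -> comp (star Y f) y = y).
    { intros X Y f y H. pose proof (A4 Y X (idm X) (join f (idm Y)) y) as E.
      rewrite A2, comp_id_r, <- A3 in E. apply E.
      rewrite comp_join_l, comp_id_l. exact H. }
    split.
    + intros Y Z f g. split.
      * apply eq_le. rewrite (A1 Y f) at 2.
        rewrite comp_join_r, comp_id_r, comp_assoc. reflexivity.
      * intros y Hy.
        assert (Hg : hle g y) by (eapply le_trans; [apply le_joinl| exact Hy]).
        assert (Hf : hle (comp y f) y) by (eapply le_trans; [apply le_joinr| exact Hy]).
        rewrite <- (IL _ _ f y Hf). apply comp_mono_l; exact Hg.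
    + intros X Y f h. split.
      * apply eq_le. rewrite (UR Y f) at 2.
        rewrite comp_join_l, comp_id_l, comp_assoc. reflexivity.
      * intros y Hy.
        assert (Hg : hle h y) by (eapply le_trans; [apply le_joinl| exact Hy]).
        assert (Hf : hle (comp f y) y) by (eapply le_trans; [apply le_joinr| exact Hy]).
        rewrite <- (IR _ _ f y Hf). apply comp_mono_r; exact Hg.
Qed.
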